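(* Let $\mathcal{A}$ be a finite set of $m$ alternatives and $\mathcal{R}=(R_1,\dots,R_n)$ a sequence of reflexive binary relations on $\mathcal{A}$. Construct the weighted directed graph $G$ whose nodes are a source $s$, a sink $t$, one node for each alternative $a\in\mathcal{A}$, and one node $v_{(a,b)}$ for each ordered pair $(a,b)$ of distinct alternatives, with the following arcs: for each ordered pair $(a,b)$ of distinct alternatives, an arc $s\to v_{(a,b)}$ of weight $N(a,b)$, an arc $v_{(a,b)}\to t$ of weight $N(b,a)$, and arcs $a\to v_{(a,b)}$ and $v_{(a,b)}\to a$ each of weight $L$, where $L>(mn)^5$; and for each unordered pair $\{a,b\}$ of distinct alternatives, arcs $a\to b$ and $b\to a$ each of weight $E(a,b)=E(b,a)$. An $s$-$t$ cut is a partition $(A,B)$ of the node set with $s\in A$, $t\in B$; its capacity is the total weight of arcs from $A$ to $B$; a minimum cut is one of minimum capacity. Then: (1) If $(A,B)$ is a minimum cut, then the dichotomous weak order given by the ordered partition $(A\cap\mathcal{A},\,B\cap\mathcal{A})$ of the alternatives has cost equal to $\mathrm{MP}(\mathcal{R},2\text{-}\mathrm{WO})$. (2) If the dichotomous weak order given by $(A',B')$ has cost equal to $\mathrm{MP}(\mathcal{R},2\text{-}\mathrm{WO})$, then $(A,B)$ is a minimum cut, where $A$ consists of $s$, the nodes of the alternatives in $A'$, and the nodes $v_{(x,y)}$ with $x\in A'$, and $B$ consists of all remaining nodes.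
   Context: For alternatives $a,b\in\mathcal{A}$, let $N(a,b)$ be the number of indices $i$ with $(a,b)\in R_i$ and $(b,a)\notin R_i$, and $E(a,b)$ the number of indices $i$ with $(a,b)\in R_i$ and $(b,a)\in R_i$. A dichotomous weak order on $\mathcal{A}$ is given by an ordered partition $(A_1,A_2)$ of $\mathcal{A}$ (disjoint, union $\mathcal{A}$): every alternative of $A_1$ is strictly preferred to every alternative of $A_2$ and alternatives in the same part are tied. Its cost is $$\sum_{a\in A_1,\ b\in A_2}\big(2N(b,a)+E(b,a)\big)+\sum_{\{a,b\}:\ a\neq b,\ a,b\text{ in the same part}}\big(N(a,b)+N(b,a)\big),$$ the second sum over unordered pairs of distinct alternatives; $\mathrm{MP}(\mathcal{R},2\text{-}\mathrm{WO})$ denotes the minimum cost over all dichotomous weak orders on $\mathcal{A}$. *)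

(* Defs.v *)
From mathcomp Require Import all_boot.
Set Implicit Arguments. Unset Strict Implicit. Unset Printing Implicit Defensive.

Section Defs.
Variables (T : finType) (n : nat) (R : 'I_n -> rel T).

Definition Ncnt (a b : T) : nat := #|[set i : 'I_n | R i a b && ~~ R i b a]|.
Definition Ecnt (a b : T) : nat := #|[set i : 'I_n | R i a b && R i b a]|.

(* Cost of the dichotomous weak order given by the ordered partition
   (A1, ~: A1).  Unordered pairs {a,b} of distinct alternatives are
   enumerated once each via enum_rank a < enum_rank b. *)
Definition dwo_cost (A1 : {set T}) : nat :=
  \sum_(a in A1) \sum_(b in ~: A1) (2 * Ncnt b a + Ecnt b a)
  + \sum_(a : T) \sum_(b : T | (enum_rank a < enum_rank b)
                                && ((a \in A1) == (b \in A1)))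
       (Ncnt a b + Ncnt b a).

Definition MP2WO : nat := \big[minn/dwo_cost setT]_(A1 : {set T}) dwo_cost A1.

Definition pairT := {p : T * T | p.1 != p.2}.
Definition node := ((bool + T) + pairT)%type.
Definition src : node := inl (inl true).
Definition snk : node := inl (inl false).
Definition alt (a : T) : node := inl (inr a).
Definition vtx (p : pairT) : node := inr p.

Variable L : nat.

Definition wG (u v : node) : nat :=
  match u, v with
  | inl (inl true), inr p => Ncnt (val p).1 (val p).2
  | inr p, inl (inl false) => Ncnt (val p).2 (val p).1
  | inl (inr a), inr p => if (val p).1 == a then L else 0
  | inr p, inl (inr a) => if (val p).1 == a then L else 0
  | inl (inr a), inl (inr b) => if a != b then Ecnt a b else 0
  | _, _ => 0
  end.

(* s-t cuts, represented by the source side A (B = ~: A) *)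
Definition st_cut (A : {set node}) : bool := (src \in A) && (snk \notin A).
Definition cut_cap (A : {set node}) : nat :=
  \sum_(u in A) \sum_(v in ~: A) wG u v.
Definition min_cut (A : {set node}) : Prop :=
  st_cut A /\ forall A' : {set node}, st_cut A' -> cut_cap A <= cut_cap A'.

Definition cut_of (A' : {set T}) : {set node} :=
  [set u : node | match u with
                  | inl (inl b) => b
                  | inl (inr a) => a \in A'
                  | inr p => (val p).1 \in A'
                  end].

Definition alt_side (A : {set node}) : {set T} := [set a | alt a \in A].
End Defs.

(* Main.v *)
Require Import Defs.
From mathcomp Require Import all_boot zify.
Set Implicit Arguments. Unset Strict Implicit. Unset Printing Implicit Defensive.

Section S.
Variables (T : finType) (n : nat) (R : 'I_n -> rel T) (L : nat).

Lemma sum_pairT (h : T -> T -> nat) :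
  \sum_(p : pairT T) h (val p).1 (val p).2 = \sum_a \sum_b (if a != b then h a b else 0).
Proof.
rewrite pair_big /= -big_mkcond /=.
rewrite (big_sub [pred p : T * T | p.1 != p.2]).
done.
Qed.

Lemma cap_mk (A : {set node T}) :
  cut_cap R L A = \sum_u \sum_v (if (u \in A) && (v \notin A) then wG R L u v else 0).
Proof.
rewrite /cut_cap big_mkcond /=; apply: eq_bigr => u _.
case: (u \in A) => /=.
  by rewrite big_mkcond; apply: eq_bigr => v _; rewrite in_setC.
by rewrite big1.
Qed.

Lemma tri (F : T -> T -> nat) : (forall a, F a a = 0) ->
  \sum_a \sum_b F a b = \sum_a \sum_(b | enum_rank a < enum_rank b) (F a b + F b a).
Proof.
move=> F0.
rewrite (eq_bigr (fun a => \sum_(b | enum_rank a < enum_rank b) F a b + \sum_(b | enum_rank b < enum_rank a) F a b)); last first.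
  move=> a _; rewrite (bigID (fun b => enum_rank a < enum_rank b)); congr (_ + _).
  rewrite [LHS](bigID (fun b => enum_rank b < enum_rank a)) [X in _ + X = _]big1 ?addn0.
    apply: eq_bigl => b; move: (nat_of_ord (enum_rank a)) (nat_of_ord (enum_rank b)) => x y; case: (ltngtP x y) => //.
  move=> b /andP[/andP[_ h1] h2].
  have -> : b = a.
    apply: enum_rank_inj; apply: val_inj => /=; move: h1 h2.
    move: (nat_of_ord (enum_rank a)) (nat_of_ord (enum_rank b)) => x y; lia.
  exact: F0.
rewrite big_split; under [RHS]eq_bigr do rewrite big_split; rewrite [RHS]big_split; congr (_ + _).
under eq_bigr do rewrite big_mkcond.
under [RHS]eq_bigr do rewrite big_mkcond.
rewrite [RHS]exchange_big; apply: eq_bigr => a _; apply: eq_bigr => b _ //.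
Qed.

Definition gA (A : {set node T}) (p : pairT T) : nat :=
  if vtx p \in A then Ncnt R (val p).2 (val p).1 + (if alt (val p).1 \in A then 0 else L)
  else Ncnt R (val p).1 (val p).2 + (if alt (val p).1 \in A then L else 0).

Definition EA (A : {set node T}) : nat :=
  \sum_a \sum_b (if (alt a \in A) && (alt b \notin A) && (a != b) then Ecnt R a b else 0).

Lemma sum_collapse (x : T) (X : T -> nat) :
  \sum_a (if x == a then X a else 0) = X x.
Proof.
rewrite (bigD1 x) //= eqxx big1 ?addn0 // => a /negbTE; rewrite eq_sym => -> //.
Qed.

Lemma sum_if0 (I : finType) (b : I -> bool) : \sum_i (if b i then 0 else 0) = 0.
Proof. by apply: big1 => i _; case: (b i). Qed.

Lemma cap_formula (A : {set node T}) : st_cut A ->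
  cut_cap R L A = \sum_p gA A p + EA A.
Proof.
case/andP => sA tA.
rewrite cap_mk big_sumType big_sumType big_bool /=.
rewrite !big_sumType !big_bool /=.
rewrite sA (negbTE tA) /= sum_if0 !big1_eq !add0n.
rewrite (eq_bigr (fun a => \sum_b (if (alt a \in A) && (alt b \notin A) && (a != b) then Ecnt R a b else 0)
   + \sum_(p : pairT T) (if (val p).1 == a then (if (alt a \in A) && (vtx p \notin A) then L else 0) else 0))); last first.
  move=> a _; rewrite big_sumType big_sumType big_bool /= sA (negbTE tA) /= andbF !if_same add0n.
  congr (_ + _); apply: eq_bigr => b _; rewrite /alt /vtx; by do !case: ifP.
rewrite [X in _ + X = _](eq_bigr (fun p : pairT T => (if vtx p \in A then Ncnt R (val p).2 (val p).1 else 0)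
   + \sum_a (if (val p).1 == a then (if (vtx p \in A) && (alt a \notin A) then L else 0) else 0))); last first.
  move=> p _; rewrite big_sumType big_sumType big_bool /= sA (negbTE tA) /=.
  rewrite andbF andbT sum_if0 addn0 add0n; congr (_ + _); apply: eq_bigr => a _.
  by rewrite /alt /vtx; do !case: ifP.
rewrite addn0 big_split /= big_split /= [X in _ + (_ + X) + _]exchange_big /=.
under [X in _ + (_ + X) + _]eq_bigr => p _ do rewrite sum_collapse.
under [X in _ + (_ + X) = _]eq_bigr => p _ do rewrite sum_collapse.
have -> : \sum_p gA A p = \sum_(p : pairT T) ((if vtx p \notin A then Ncnt R (val p).1 (val p).2 else 0)
   + (if (alt (val p).1 \in A) && (vtx p \notin A) then L else 0)
   + ((if vtx p \in A then Ncnt R (val p).2 (val p).1 else 0)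
   + (if (vtx p \in A) && (alt (val p).1 \notin A) then L else 0))).
  apply: eq_bigr => p _; rewrite /gA; case: (vtx p \in A); case: (alt _ \in A) => /=; lia.
rewrite !big_split /= /EA.
have H5 : forall a b c d e : nat, a + (e + b) + (c + d) = a + b + (c + d) + e by move=> *; lia.
exact: H5.
Qed.

Lemma Ecnt_sym a b : Ecnt R a b = Ecnt R b a.
Proof. by rewrite /Ecnt; apply: eq_card => i; rewrite !inE andbC. Qed.

Lemma sum_in_in (S : {set T}) (X : T -> T -> nat) :
  \sum_(a in S) \sum_(b in ~: S) X a b = \sum_a \sum_b (if (a \in S) && (b \notin S) then X a b else 0).
Proof.
rewrite big_mkcond /=; apply: eq_bigr => a _.
case: (a \in S) => /=.
  by rewrite big_mkcond; apply: eq_bigr => b _; rewrite in_setC.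
by rewrite big1.
Qed.

Lemma cap_cut_of (S : {set T}) : cut_cap R L (cut_of S) = dwo_cost R S.
Proof.
rewrite cap_formula; last by rewrite /st_cut !inE.
rewrite (eq_bigr (fun p : pairT T => (fun a b => if a \in S then Ncnt R b a else Ncnt R a b) (val p).1 (val p).2)); last first.
  by move=> p _; rewrite /gA !inE /=; case: ifP => h; rewrite h addn0.
rewrite (sum_pairT (fun a b => if a \in S then Ncnt R b a else Ncnt R a b)) /EA -big_split /=.
under eq_bigr do rewrite -big_split /=.
rewrite tri; last by move=> a; rewrite eqxx andbF.
rewrite /dwo_cost.
rewrite sum_in_in tri; last by move=> a; rewrite andbN.
under [X in _ = _ + X]eq_bigr do rewrite big_mkcondr.
rewrite -big_split; apply: eq_bigr => a _; rewrite -big_split; apply: eq_bigr => b hab.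
have nab : a != b by apply: contraTneq hab => ->; rewrite ltnn.
rewrite nab eq_sym nab !inE /= (Ecnt_sym b a).
by case: (a \in S); case: (b \in S) => /=; lia.
Qed.

Lemma Ncnt_le a b : Ncnt R a b <= n.
Proof. by rewrite /Ncnt; apply: leq_trans (max_card _) _; rewrite card_ord. Qed.

Lemma cap_norm (A : {set node T}) : (#|T| * n) ^ 5 < L -> st_cut A ->
  cut_cap R L (cut_of (alt_side A)) <= cut_cap R L A.
Proof.
move=> HL stA.
rewrite !cap_formula //; last by rewrite /st_cut !inE.
have -> : EA (cut_of (alt_side A)) = EA A.
  rewrite /EA; apply: eq_bigr => a _; apply: eq_bigr => b _; by rewrite !inE /= !inE.
rewrite leq_add2r; apply: leq_sum => p _.
have nL : n < L.
  have T0 : 0 < #|T| by apply/card_gt0P; exists (val p).1.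
  apply: leq_ltn_trans HL.
  have h1 : n <= #|T| * n by rewrite leq_pmull.
  apply: leq_trans h1 _.
  case: (posnP (#|T| * n)) => [-> //| x0].
  by rewrite -{1}(expn1 (#|T| * n)) leq_pexp2l.
have h1 := Ncnt_le (val p).1 (val p).2.
have h2 := Ncnt_le (val p).2 (val p).1.
rewrite /gA !inE /= !inE.
by move: h1 h2 => /= h1 h2; case: (vtx p \in A); case: (alt _ \in A) => /=; lia.
Qed.
End S.

Lemma MP_le (T : finType) (n : nat) (R : 'I_n -> rel T) (A1 : {set T}) :
  MP2WO R <= dwo_cost R A1.
Proof.
rewrite /MP2WO; have : A1 \in index_enum {set T} by rewrite mem_index_enum.
elim: (index_enum _) => [//|x r IH]; rewrite inE big_cons /=.
case/orP => [/eqP <-|/IH h]; first exact: geq_minl.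
exact: leq_trans (geq_minr _ _) h.
Qed.

Lemma le_MP (T : finType) (n : nat) (R : 'I_n -> rel T) (c : nat) :
  (forall A1, c <= dwo_cost R A1) -> c <= MP2WO R.
Proof.
move=> H; rewrite /MP2WO; apply: (big_ind (fun y => c <= y)) => //.
by move=> x y hx hy; rewrite leq_min hx hy.
Qed.

Theorem mainTheorem2 (T : finType) (n : nat) (R : 'I_n -> rel T)
    (Rrefl : forall i, reflexive (R i))
    (L : nat) (HL : (#|T| * n) ^ 5 < L) :
  (forall A : {set node T},
     min_cut R L A -> dwo_cost R (alt_side A) = MP2WO R)
  /\
  (forall A' : {set T},
     dwo_cost R A' = MP2WO R -> min_cut R L (cut_of A')).
Proof.
have stc : forall S : {set T}, st_cut (cut_of S) by move=> S; rewrite /st_cut !inE.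
split.
  move=> A [stA minA]; apply/eqP; rewrite eqn_leq MP_le andbT.
  apply: le_MP => A1.
  rewrite -(cap_cut_of R L) -(cap_cut_of R L A1).
  exact: leq_trans (@cap_norm T n R L A HL stA) (minA _ (stc A1)).
move=> A' hA'; split; first exact: stc.
move=> A'' st''; rewrite cap_cut_of hA'.
apply: leq_trans (MP_le R (alt_side A'')) _.
rewrite -(cap_cut_of R L); exact: (@cap_norm T n R L A'' HL st'').
Qed.
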